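(* Let $d\ge2$, $N\ge1$ and let $\rho$ be a state on $(\mathbb{C}^d)^{\otimes N}$. For operators $\lambda_1,\dots,\lambda_N$ on $\mathbb{C}^d$ define $$\mathcal{R}(\lambda_1,\dots,\lambda_N)=\int dU_1\cdots\int dU_N\;\Big|\mathrm{Tr}\Big(\rho\,\bigotimes_{n=1}^{N}U_n^\dagger\lambda_n^\dagger U_n\Big)\Big|^2,$$ where each integral is over $U(d)$ with respect to the normalized Haar measure. Then $\mathcal{R}(\lambda_1,\dots,\lambda_N)$ takes the same value for all choices of $\lambda_1,\dots,\lambda_N$ satisfying $\mathrm{Tr}(\lambda_n)=0$ and $\mathrm{Tr}(\lambda_n\lambda_n^\dagger)=d$ for every $n$. *)

(* Defs.v *)
From HB Require Import structures.
From mathcomp Require Import all_boot all_order all_algebra.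
From mathcomp Require Import reals.
From mathcomp.real_closed Require Import complex mxtens.

Set Implicit Arguments.
Unset Strict Implicit.
Unset Printing Implicit Defensive.

Import Order.TTheory GRing.Theory Num.Theory.
Local Open Scope ring_scope.
Local Open Scope complex_scope.

Section Defs.
Variable R : realType.
Local Notation C := (R[i]).

Definition adj {m n} (A : 'M[C]_(m, n)) : 'M[C]_(n, m) :=
  \matrix_(i, j) (A j i)^*.

Definition unitary {d} (U : 'M[C]_d) : Prop := U *m adj U = 1%:M.

Definition abs2 (z : C) : R := complex.Re z ^+ 2 + complex.Im z ^+ 2.

Definition cabs (z : C) : R := Normc.normc z.

Definition is_state {n} (rho : 'M[C]_n) : Prop :=
  [/\ adj rho = rho,
      (forall v : 'cV[C]_n, 0 <= (adj v *m rho *m v) 0 0)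
    & \tr rho = 1].

Fixpoint tensN {d} (n : nat) (f : nat -> 'M[C]_d) : 'M[C]_(d ^ n) :=
  match n return 'M[C]_(d ^ n) with
  | 0 => 1%:M
  | n'.+1 => castmx (esym (expnS d n'), esym (expnS d n'))
               (f 0%N *t tensN n' (fun k => f k.+1))
  end.

Definition cont_on_unitary {d} (f : 'M[C]_d -> R) : Prop :=
  forall U, unitary U -> forall e : R, 0 < e -> exists2 dl : R, 0 < dl &
    forall V, unitary V -> (forall i j, cabs (V i j - U i j) < dl) ->
      `|f V - f U| < e.

(* I is (the integral against) the normalized Haar measure on U(d):
   a normalized positive left-invariant linear functional on the continuous
   real functions on U(d), depending only on the values on U(d).  By the Riesz
   representation theorem and uniqueness of Haar measure, the only such
   functional is f |-> \int f dU (normalized Haar measure). *)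
Definition haar_integral d (I : ('M[C]_d -> R) -> R) : Prop :=
  [/\ (forall f g, (forall U, unitary U -> f U = g U) -> I f = I g),
      (forall f g, cont_on_unitary f -> cont_on_unitary g ->
          I (fun U => f U + g U) = I f + I g),
      (forall (c : R) f, cont_on_unitary f -> I (fun U => c * f U) = c * I f),
      (forall f, cont_on_unitary f -> (forall U, unitary U -> 0 <= f U) ->
          0 <= I f)
    & I (fun _ => 1) = 1
    /\ (forall V f, unitary V -> cont_on_unitary f ->
          I (fun U => f (V *m U)) = I f)].

Fixpoint iter_int {d} (I : ('M[C]_d -> R) -> R) (n : nat)
    (F : (nat -> 'M[C]_d) -> R) : R :=
  match n with
  | 0 => F (fun _ => 1%:M)
  | n'.+1 => I (fun U => iter_int I n'
                  (fun Us => F (fun k => if k is k'.+1 then Us k' else U)))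
  end.

(* R(lambda_1, ..., lambda_N)  (indices shifted to 0 .. N-1) *)
Definition Rfun {d N} (I : ('M[C]_d -> R) -> R) (rho : 'M[C]_(d ^ N))
    (lam : nat -> 'M[C]_d) : R :=
  iter_int I N (fun Us =>
    abs2 (\tr (rho *m tensN N (fun n => adj (Us n) *m adj (lam n) *m Us n)))).

End Defs.

(* Main.v *)
Require Import Defs.
From HB Require Import structures.
From mathcomp Require Import all_boot all_order all_algebra.
From mathcomp Require Import reals.
From mathcomp.real_closed Require Import complex mxtens.
From mathcomp Require Import ring lra.
From mathcomp Require Import perm fingroup.
From Stdlib Require Import FunctionalExtensionality.
Import Order.TTheory GRing.Theory Num.Theory.
Local Open Scope ring_scope.
Local Open Scope complex_scope.

Set Implicit Arguments.
Unset Strict Implicit.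
Unset Printing Implicit Defensive.

Definition cj (R : realType) (x : R[i]) : R[i] := conjc x.
Arguments cj {R} x : simpl never.

Section Cont.
Variable R : realType.
Local Notation C := R[i].
Variable d : nat.
Local Notation M := 'M[C]_d.

Lemma mnl (x y : R) : Num.min x y <= x. Proof. by rewrite ge_min lexx. Qed.
Lemma mnr (x y : R) : Num.min x y <= y. Proof. by rewrite ge_min lexx orbT. Qed.

Lemma cabs_ge0 (z : C) : 0 <= cabs z.
Proof. by case: z => a b; rewrite /cabs /= sqrtr_ge0. Qed.

Lemma cabsD (x y : C) : cabs (x + y) <= cabs x + cabs y.
Proof. exact: le_normcD. Qed.

Lemma cabsM (x y : C) : cabs (x * y) = cabs x * cabs y.
Proof. exact: Normc.normcM. Qed.

Lemma cabsN (x : C) : cabs (- x) = cabs x.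
Proof. exact: normcN. Qed.

Lemma cabsJ (x : C) : cabs (x^*) = cabs x.
Proof. by case: x => a b; rewrite /cabs /= sqrrN. Qed.

Lemma cabs_Re (z : C) : `|complex.Re z| <= cabs z.
Proof.
case: z => a b; rewrite /cabs /=.
rewrite -sqrtr_sqr ler_sqrt ?addr_ge0 ?sqr_ge0 // lerDl sqr_ge0 //.
Qed.

Lemma cabs_Im (z : C) : `|complex.Im z| <= cabs z.
Proof.
case: z => a b; rewrite /cabs /=.
rewrite -sqrtr_sqr ler_sqrt ?addr_ge0 ?sqr_ge0 // lerDr sqr_ge0 //.
Qed.

Lemma cabsB_le (x y : C) : cabs x <= cabs y + cabs (x - y).
Proof. by have := cabsD y (x - y); rewrite addrC subrK. Qed.

Definition contc (f : M -> C) : Prop :=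
  forall U, unitary U -> forall e : R, 0 < e -> exists2 dl : R, 0 < dl &
    forall V, unitary V -> (forall i j, cabs (V i j - U i j) < dl) ->
      cabs (f V - f U) < e.

Lemma contc_ext f g : (forall U, f U = g U) -> contc f -> contc g.
Proof. by move=> /functional_extensionality ->. Qed.

Lemma contc_cst c : contc (fun _ => c).
Proof.
move=> U _ e e0; exists 1 => // V _ _; rewrite subrr.
by have -> : cabs 0 = 0 by exact: Normc.normc0.
Qed.

Lemma contc_entry i j : contc (fun U => U i j).
Proof. by move=> U _ e e0; exists e => // V _ H; apply: H. Qed.

Lemma contc_conj f : contc f -> contc (fun U => (f U)^*).
Proof.
move=> cf U hU e e0; have [dl dl0 H] := cf U hU e e0; exists dl => // V hV HV.
by rewrite -rmorphB cabsJ; apply: H.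
Qed.

Lemma contc_cj f : contc f -> contc (fun U => cj (f U)).
Proof. exact: contc_conj. Qed.

Lemma contc_add f g : contc f -> contc g -> contc (fun U => f U + g U).
Proof.
move=> cf cg U hU e e0.
have e20 : 0 < e / 2 by rewrite divr_gt0.
have [d1 d10 H1] := cf U hU _ e20; have [d2 d20 H2] := cg U hU _ e20.
exists (Num.min d1 d2); first by rewrite lt_min d10 d20.
move=> V hV HV.
have h1 := H1 V hV (fun i j => lt_le_trans (HV i j) (mnl _ _)).
have h2 := H2 V hV (fun i j => lt_le_trans (HV i j) (mnr _ _)).
have -> : f V + g V - (f U + g U) = (f V - f U) + (g V - g U) by ring.
apply: le_lt_trans (cabsD _ _) _.
by rewrite [e](splitr e) ltrD.
Qed.

Lemma contc_mul f g : contc f -> contc g -> contc (fun U => f U * g U).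
Proof.
move=> cf cg U hU e e0.
set A := cabs (f U); set B := cabs (g U).
have A0 : 0 <= A by apply: cabs_ge0.
have B0 : 0 <= B by apply: cabs_ge0.
have e1p : 0 < e / (2 * (B + 1)) by rewrite divr_gt0 // mulr_gt0 // ltr_wpDl.
have e2p : 0 < e / (2 * (A + 1)) by rewrite divr_gt0 // mulr_gt0 // ltr_wpDl.
have e1'p : 0 < Num.min 1 (e / (2 * (B + 1))) by rewrite lt_min ltr01 e1p.
have [d1 d10 H1] := cf U hU _ e1'p; have [d2 d20 H2] := cg U hU _ e2p.
exists (Num.min d1 d2); first by rewrite lt_min d10 d20.
move=> V hV HV.
have h1 := H1 V hV (fun i j => lt_le_trans (HV i j) (mnl _ _)).
have h2 := H2 V hV (fun i j => lt_le_trans (HV i j) (mnr _ _)).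
have -> : f V * g V - f U * g U = f V * (g V - g U) + (f V - f U) * g U by ring.
apply: le_lt_trans (cabsD _ _) _; rewrite !cabsM -/B.
set nf := cabs (f V - f U) in h1 *; set ng := cabs (g V - g U) in h2 *.
have nf0 : 0 <= nf by apply: cabs_ge0.
have ng0 : 0 <= ng by apply: cabs_ge0.
have hfV : cabs (f V) <= A + 1.
  apply: le_trans (cabsB_le (f V) (f U)) _; rewrite lerD2l.
  by apply/ltW/(lt_le_trans h1); rewrite mnl.
have h1' : nf * (2 * (B + 1)) <= e.
  rewrite -ler_pdivlMr ?mulr_gt0 ?ltr_wpDl //.
  by apply/ltW/(lt_le_trans h1); rewrite mnr.
have h2' : ng * (2 * (A + 1)) < e by rewrite -ltr_pdivlMr ?mulr_gt0 ?ltr_wpDl.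
have hfV0 : 0 <= cabs (f V) by apply: cabs_ge0.
nra.
Qed.

Lemma contc_sum (J : Type) (s : seq J) (F : J -> M -> C) :
  (forall j, contc (F j)) -> contc (fun U => \sum_(j <- s) F j U).
Proof.
move=> cF; elim: s => [|j s IH].
  by apply: contc_ext (contc_cst 0) => U; rewrite big_nil.
by apply: contc_ext (contc_add (cF j) IH) => U; rewrite big_cons.
Qed.

Lemma contR_Re f : contc f -> cont_on_unitary (fun U => complex.Re (f U)).
Proof.
move=> cf U hU e e0; have [dl dl0 H] := cf U hU e e0; exists dl => // V hV HV.
apply: le_lt_trans (H V hV HV).
by have := cabs_Re (f V - f U); case: (f V) => a b; case: (f U).
Qed.

Lemma contR_Im f : contc f -> cont_on_unitary (fun U => complex.Im (f U)).
Proof.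
move=> cf U hU e e0; have [dl dl0 H] := cf U hU e e0; exists dl => // V hV HV.
apply: le_lt_trans (H V hV HV).
by have := cabs_Im (f V - f U); case: (f V) => a b; case: (f U).
Qed.

End Cont.

Lemma contR_ext (R : realType) d (f g : 'M[R[i]]_d -> R) :
  (forall U, f U = g U) -> cont_on_unitary f -> cont_on_unitary g.
Proof. by move=> /functional_extensionality ->. Qed.

Section Haar.
Variable R : realType.
Local Notation C := R[i].
Variable d : nat.
Local Notation M := 'M[C]_d.
Variable I : (M -> R) -> R.
Hypothesis hI : haar_integral I.

Definition Ic (f : M -> C) : C :=
  (I (fun U => complex.Re (f U))) +i* (I (fun U => complex.Im (f U))).

Lemma Ic_add (f g : M -> C) : contc f -> contc g -> Ic (fun U => f U + g U) = Ic f + Ic g.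
Proof.
case: hI => _ hadd _ _ _ cf cg.
rewrite /Ic; congr (_ +i* _).
- have -> : (fun U => complex.Re (f U + g U)) =
    (fun U => complex.Re (f U) + complex.Re (g U)).
    by apply: functional_extensionality => U; case: (f U); case: (g U).
  by rewrite hadd //; [apply: contR_Re|apply: contR_Re].
- have -> : (fun U => complex.Im (f U + g U)) =
    (fun U => complex.Im (f U) + complex.Im (g U)).
    by apply: functional_extensionality => U; case: (f U); case: (g U).
  by rewrite hadd //; [apply: contR_Im|apply: contR_Im].
Qed.

Lemma contR_scaleRe (f : M -> C) k : contc f -> cont_on_unitary (fun U => k * complex.Re (f U)).
Proof.
move=> cf; apply: (contR_ext _ (contR_Re (contc_mul (contc_cst k%:C) cf))).
by move=> U; case: (f U) => a b /=; rewrite mul0r subr0.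
Qed.

Lemma contR_scaleIm (f : M -> C) k : contc f -> cont_on_unitary (fun U => k * complex.Im (f U)).
Proof.
move=> cf; apply: (contR_ext _ (contR_Im (contc_mul (contc_cst k%:C) cf))).
by move=> U; case: (f U) => a b /=; rewrite mul0r addr0.
Qed.

Lemma Ic_scale (c : C) (f : M -> C) : contc f -> Ic (fun U => c * f U) = c * Ic f.
Proof.
case: hI => _ hadd hsc _ _ cf.
have cRe := contR_Re cf; have cIm := contR_Im cf.
case: c => cr ci; rewrite /Ic /=.
have -> : (fun U => complex.Re ((cr +i* ci) * f U)) =
   (fun U => cr * complex.Re (f U) + (- ci) * complex.Im (f U)).
  by apply: functional_extensionality => U; case: (f U) => a b /=; rewrite mulNr.
have -> : (fun U => complex.Im ((cr +i* ci) * f U)) =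
   (fun U => cr * complex.Im (f U) + ci * complex.Re (f U)).
  by apply: functional_extensionality => U; case: (f U) => a b /=.
rewrite !hadd ?hsc //; try apply: contR_scaleRe; try apply: contR_scaleIm; auto.
by rewrite mulNr.
Qed.

Lemma Ic_sum (J : Type) (s : seq J) (F : J -> M -> C) :
  (forall j, contc (F j)) -> Ic (fun U => \sum_(j <- s) F j U) = \sum_(j <- s) Ic (F j).
Proof.
move=> cF; elim: s => [|j s IH].
  rewrite big_nil.
  have -> : (fun U : M => \sum_(j <- [::]) F j U) = (fun U => 0 * 0).
    by apply: functional_extensionality => U; rewrite big_nil mulr0.
  by rewrite Ic_scale ?mul0r //; apply: contc_cst.
have -> : (fun U : M => \sum_(j0 <- j :: s) F j0 U) =
   (fun U => F j U + \sum_(j0 <- s) F j0 U).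
  by apply: functional_extensionality => U; rewrite big_cons.
by rewrite Ic_add ?IH ?big_cons //; apply: contc_sum.
Qed.

Lemma Ic_inv (W : M) (f : M -> C) : unitary W -> contc f -> Ic (fun U => f (W *m U)) = Ic f.
Proof.
case: hI => _ _ _ _ [_ hinv] hW cf; rewrite /Ic.
rewrite (hinv W (fun U => complex.Re (f U))) //; last exact: contR_Re.
by rewrite (hinv W (fun U => complex.Im (f U))) //; exact: contR_Im.
Qed.

End Haar.

Section SumN.
Variable R : realType.
Local Notation C := R[i].

Fixpoint sumN (T : finType) (n : nat) (F : seq T -> C) : C :=
  match n with
  | 0 => F [::]
  | n'.+1 => \sum_(q : T) sumN n' (fun s => F (q :: s))
  end.

Fixpoint pr (T : Type) (s : seq T) (G : nat -> T -> C) : C :=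
  match s with
  | [::] => 1
  | q :: s' => G 0%N q * pr s' (fun m => G m.+1)
  end.

Lemma sumN_ext (T : finType) n (F F' : seq T -> C) :
  (forall s, size s = n -> F s = F' s) -> sumN n F = sumN n F'.
Proof.
elim: n F F' => [|n IH] F F' H /=; first by apply: H.
apply: eq_bigr => q _; apply: IH => s hs; apply: H => /=; by rewrite hs.
Qed.

Lemma sumN_sum (T : finType) (J : finType) n (F : J -> seq T -> C) :
  sumN n (fun s => \sum_j F j s) = \sum_j sumN n (F j).
Proof.
elim: n F => [|n IH] F //=.
rewrite (eq_bigr (fun q => \sum_j sumN n (fun s => F j (q :: s)))); last first.
  by move=> q _; rewrite IH.
by rewrite exchange_big.
Qed.

Lemma sumN_scale (T : finType) n (c : C) (F : seq T -> C) :
  sumN n (fun s => c * F s) = c * sumN n F.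
Proof.
elim: n F => [|n IH] F //=.
by rewrite mulr_sumr; apply: eq_bigr => q _; rewrite IH.
Qed.

Lemma sumN_conj (T : finType) n (F : seq T -> C) :
  (sumN n F)^* = sumN n (fun s => (F s)^*).
Proof.
elim: n F => [|n IH] F //=.
by rewrite rmorph_sum; apply: eq_bigr => q _; exact: IH.
Qed.

Lemma sumN_mul (T : finType) n (F G : seq T -> C) :
  sumN n F * sumN n G =
  sumN n (fun qs : seq (T * T) => F (unzip1 qs) * G (unzip2 qs)).
Proof.
elim: n F G => [|n IH] F G //=.
rewrite mulr_suml.
rewrite (eq_bigr (fun q => \sum_q' sumN n (fun qs : seq (T * T) =>
     F (q :: unzip1 qs) * G (q' :: unzip2 qs)))); last first.
  by move=> q _; rewrite mulr_sumr; apply: eq_bigr => q' _; rewrite IH.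
by rewrite pair_big /=; apply: eq_bigr => [[q q']] _.
Qed.

Lemma pr_ext (T : Type) (s : seq T) (G G' : nat -> T -> C) :
  (forall m q, (m < size s)%N -> G m q = G' m q) -> pr s G = pr s G'.
Proof.
elim: s G G' => [|q s IH] G G' H //=.
by rewrite H // (IH (fun m => G m.+1) (fun m => G' m.+1)) // => m q' hm; apply: H.
Qed.

Lemma pr_conj (T : Type) (s : seq T) (G : nat -> T -> C) :
  (pr s G)^* = pr s (fun m q => (G m q)^*).
Proof.
elim: s G => [|q s IH] G /=; first exact: (rmorph1 conjc).
by rewrite rmorphM; congr (_ * _); apply: IH.
Qed.

Lemma pr_mul (T : Type) (qs : seq (T * T)) (G G' : nat -> T -> C) :
  pr (unzip1 qs) G * pr (unzip2 qs) G' = pr qs (fun m q => G m q.1 * G' m q.2).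
Proof.
elim: qs G G' => [|[q q'] qs IH] G G' /=; first by rewrite mulr1.
by rewrite -(IH (fun m => G m.+1) (fun m => G' m.+1)); ring.
Qed.

End SumN.

Section Trace.
Variable R : realType.
Local Notation C := R[i].

Lemma sum_tens m n (F : 'I_(m * n) -> C) :
  \sum_x F x = \sum_(i : 'I_m) \sum_(k : 'I_n) F (mxtens_index (i, k)).
Proof.
rewrite pair_big /= (reindex (@mxtens_index m n)) /=.
  by apply: eq_bigr => [[i k]] _.
by exists (@mxtens_unindex m n) => x _; rewrite (mxtens_indexK, mxtens_unindexK).
Qed.

Lemma tr_cast m n (e : m = n) (A : 'M[C]_n) (B : 'M[C]_m) :
  \tr (A *m castmx (e, e) B) = \tr (castmx (esym e, esym e) A *m B).
Proof. by case: n / e in A *; rewrite !castmx_id. Qed.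

Definition blk d n (A : 'M[C]_(d * n)) (i j : 'I_d) : 'M[C]_n :=
  \matrix_(k, l) A (mxtens_index (i, k)) (mxtens_index (j, l)).

Lemma tr_tens_step d n (A : 'M[C]_(d * n)) (X : 'M[C]_d) (T : 'M[C]_n) :
  \tr (A *m (X *t T)) = \sum_(p : 'I_d * 'I_d) X p.1 p.2 * \tr (blk A p.2 p.1 *m T).
Proof.
rewrite -(pair_bigA _ (fun j i => X j i * \tr (blk A i j *m T))) /mxtrace sum_tens /=.
rewrite [RHS]exchange_big /=; apply: eq_bigr => i _.
rewrite (eq_bigr (fun j => \sum_k X j i * (blk A i j *m T) k k)); last first.
  by move=> j _; rewrite mulr_sumr.
rewrite [RHS]exchange_big /=; apply: eq_bigr => k _.
rewrite !mxE sum_tens; apply: eq_bigr => j _.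
rewrite !mxE mulr_sumr; apply: eq_bigr => l _.
rewrite tensmxE !mxE; ring.
Qed.

Lemma tr_tens d N (rho : 'M[C]_(d ^ N)) :
  { kap : seq ('I_d * 'I_d) -> C | forall Y : nat -> 'M[C]_d,
    \tr (rho *m tensN N Y) = sumN N (fun s => kap s * pr s (fun m p => Y m p.1 p.2)) }.
Proof.
elim: N rho => [|N IH] rho.
  by exists (fun _ => \tr rho) => Y /=; rewrite mulmx1 mulr1.
pose kap s := match s with
  | p :: s' => proj1_sig (IH (blk (castmx (esym (esym (expnS d N)), esym (esym (expnS d N))) rho) p.2 p.1)) s'
  | [::] => 0 end.
exists kap => Y /=.
rewrite tr_cast tr_tens_step; apply: eq_bigr => p _.
rewrite (proj2_sig (IH _)) -sumN_scale; apply: sumN_ext => s _ /=.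
rewrite /kap; ring.
Qed.

End Trace.

Section Iter.
Variable R : realType.
Local Notation C := R[i].
Variable d : nat.
Local Notation M := 'M[C]_d.
Variable I : (M -> R) -> R.
Hypothesis hI : haar_integral I.

Lemma iter_int_pf (T : finType) n : forall (c : seq T -> C) (G : nat -> T -> M -> C),
  (forall m q, contc (G m q)) ->
  iter_int I n (fun Us => complex.Re (sumN n (fun qs => c qs * pr qs (fun m q => G m q (Us m))))) =
  complex.Re (sumN n (fun qs => c qs * pr qs (fun m q => Ic I (G m q)))).
Proof.
elim: n => [|n IH] c G HG; first by [].
rewrite /=.
pose w q := sumN n (fun s => c (q :: s) * pr s (fun m q => Ic I (G m.+1 q))).
have inner : forall U, iter_int I n (fun Us => complex.Re (\sum_q sumN n
     (fun s => c (q :: s) * (G 0%N q U * pr s (fun m q => G m.+1 q (Us m)))))) =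
   complex.Re (\sum_q w q * G 0%N q U).
  move=> U.
  have -> : (fun Us : nat -> M => complex.Re (\sum_q sumN n
     (fun s => c (q :: s) * (G 0%N q U * pr s (fun m q => G m.+1 q (Us m)))))) =
    (fun Us => complex.Re (sumN n (fun s => (\sum_q c (q :: s) * G 0%N q U) *
        pr s (fun m q => G m.+1 q (Us m))))).
    apply: functional_extensionality => Us; congr complex.Re.
    rewrite -sumN_sum; apply: sumN_ext => s _; rewrite mulr_suml.
    by apply: eq_bigr => q _; rewrite mulrA.
  rewrite (IH (fun s => \sum_q c (q :: s) * G 0%N q U) (fun m => G m.+1)) //.
  congr complex.Re.
  rewrite (sumN_ext (F' := fun s => \sum_q G 0%N q U * (c (q :: s) *
       pr s (fun m q => Ic I (G m.+1 q))))); last first.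
    by move=> s _; rewrite mulr_suml; apply: eq_bigr => q _; ring.
  rewrite sumN_sum; apply: eq_bigr => q _; rewrite sumN_scale mulrC.
  by [].
rewrite (_ : (fun U => _) = (fun U => complex.Re (\sum_q w q * G 0%N q U))); last first.
  by apply: functional_extensionality => U; rewrite -inner.
have -> : I (fun U => complex.Re (\sum_q w q * G 0%N q U)) =
   complex.Re (Ic I (fun U => \sum_q w q * G 0%N q U)) by [].
rewrite Ic_sum //; last by move=> q; apply: contc_mul; [apply: contc_cst|].
congr complex.Re; apply: eq_bigr => q _.
rewrite Ic_scale // /w mulrC -sumN_scale; apply: sumN_ext => s _ /=; ring.
Qed.

End Iter.

Section Key.
Variable R : realType.
Local Notation C := R[i].
Variable d : nat.
Local Notation M := 'M[C]_d.
Variable I : (M -> R) -> R.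
Hypothesis hI : haar_integral I.
Variables a b c e : 'I_d.

Lemma conjD (x y : C) : (cj (x + y)) = (cj x) + (cj y). Proof. exact: rmorphD. Qed.
Lemma conjM (x y : C) : (cj (x * y)) = (cj x) * (cj y). Proof. exact: rmorphM. Qed.
Lemma conj0 : (cj (0 : C)) = 0. Proof. exact: conjc0. Qed.
Lemma conj1 : (cj (1 : C)) = 1. Proof. exact: conjc1. Qed.
Lemma conjK (x : C) : cj (cj x) = x. Proof. exact: conjcK. Qed.

Lemma conj_sum (J : Type) (s : seq J) (F : J -> C) :
  (cj (\sum_(j <- s) F j)) = \sum_(j <- s) (cj (F j)).
Proof.
elim: s => [|j s IH]; first by rewrite !big_nil conj0.
by rewrite !big_cons conjD; congr (_ + _); exact: IH.
Qed.

Lemma conj_sumf (J : finType) (F : J -> C) :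
  (cj (\sum_j F j)) = \sum_j (cj (F j)).
Proof. exact: conj_sum. Qed.

Lemma entry_formula (U B : M) (x y : 'I_d) :
  (adj U *m B *m U) x y = \sum_i \sum_j (cj (U i x)) * B i j * U j y.
Proof.
rewrite mxE exchange_big /=; apply: eq_bigr => j _; rewrite !mxE mulr_suml.
by apply: eq_bigr => i _; rewrite !mxE.
Qed.

Lemma contc_entryf (B : M) x y : contc (fun U : M => (adj U *m B *m U) x y).
Proof.
apply: contc_ext (fun U => esym (entry_formula U B x y)) _.
apply: contc_sum => i; apply: contc_sum => j.
apply: contc_mul; last exact: contc_entry.
by apply: contc_mul; [apply: contc_cj; apply: contc_entry|apply: contc_cst].
Qed.

Definition Hf (B B' : M) (U : M) : C :=
  (adj U *m B *m U) a b * (cj ((adj U *m B' *m U) c e)).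

Lemma contc_Hf B B' : contc (Hf B B').
Proof. by apply: contc_mul; [|apply: contc_cj]; apply: contc_entryf. Qed.

Definition H (B B' : M) : C := Ic I (Hf B B').

Lemma adjM (A B : M) : adj (A *m B) = adj B *m adj A.
Proof.
apply/matrixP => x y; rewrite !mxE; apply: (etrans (conj_sumf _)); apply: eq_bigr => z _.
by rewrite !mxE conjM mulrC.
Qed.

Lemma adjE (A : M) x y : adj A x y = cj (A y x).
Proof. by rewrite mxE. Qed.

Lemma adjK (A : M) : adj (adj A) = A.
Proof. by apply/matrixP => x y; rewrite !mxE; exact: conjK. Qed.

Lemma cj_entry (U B' : M) x y : cj ((adj U *m B' *m U) x y) = (adj U *m adj B' *m U) y x.
Proof.
have -> : cj ((adj U *m B' *m U) x y) = (adj (adj U *m B' *m U)) y x by rewrite [RHS]mxE.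
by rewrite !adjM adjK mulmxA.
Qed.

Definition phi (i j k l : 'I_d) (U : M) : C :=
  cj (U i a) * U j b * (cj (U l e) * U k c).

Lemma contc_phi i j k l : contc (phi i j k l).
Proof.
by apply: contc_mul; apply: contc_mul; try apply: contc_cj; apply: contc_entry.
Qed.

Definition h i j k l := Ic I (phi i j k l).

Lemma H_expand B B' : H B B' =
  \sum_i \sum_j \sum_k \sum_l (B i j * (cj (B' k l))) * h i j k l.
Proof.
rewrite /H.
have -> : Hf B B' = fun U => \sum_i \sum_j \sum_k \sum_l (B i j * (cj (B' k l))) * phi i j k l U.
  apply: functional_extensionality => U.
  rewrite /Hf cj_entry !entry_formula mulr_suml; apply: eq_bigr => i _.
  rewrite mulr_suml; apply: eq_bigr => j _.
  rewrite mulr_sumr; under eq_bigr => k _ do rewrite mulr_sumr.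
  rewrite [LHS]exchange_big /=; apply: eq_bigr => k _; apply: eq_bigr => l _.
  by rewrite /phi adjE; ring.
have cs : forall i j k l, contc (fun U => (B i j * (cj (B' k l))) * phi i j k l U).
  by move=> i j k l; apply: contc_mul; [apply: contc_cst|apply: contc_phi].
rewrite Ic_sum //; last by move=> i; do 3 (apply: contc_sum => ?).
apply: eq_bigr => i _; rewrite Ic_sum //; last by move=> j; do 2 (apply: contc_sum => ?).
apply: eq_bigr => j _; rewrite Ic_sum //; last by move=> k; apply: contc_sum => ?.
apply: eq_bigr => k _; rewrite Ic_sum //.
by apply: eq_bigr => l _; rewrite Ic_scale //; apply: contc_phi.
Qed.

Lemma H_addl B1 B2 B' : H (B1 + B2) B' = H B1 B' + H B2 B'.
Proof.
rewrite !H_expand -big_split; apply: eq_bigr => i _.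
rewrite -big_split; apply: eq_bigr => j _.
rewrite -big_split; apply: eq_bigr => k _.
rewrite -big_split; apply: eq_bigr => l _.
by rewrite mxE /=; ring.
Qed.

Lemma H_addr B B1 B2 : H B (B1 + B2) = H B B1 + H B B2.
Proof.
rewrite !H_expand -big_split; apply: eq_bigr => i _.
rewrite -big_split; apply: eq_bigr => j _.
rewrite -big_split; apply: eq_bigr => k _.
rewrite -big_split; apply: eq_bigr => l _.
by rewrite mxE conjD /= mulrDr mulrDl.
Qed.

Lemma H_scalel (x : C) B B' : H (x *: B) B' = x * H B B'.
Proof.
rewrite !H_expand mulr_sumr; apply: eq_bigr => i _.
rewrite mulr_sumr; apply: eq_bigr => j _.
rewrite mulr_sumr; apply: eq_bigr => k _.
rewrite mulr_sumr; apply: eq_bigr => l _.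
by rewrite mxE /=; ring.
Qed.

Lemma H_scaler (x : C) B B' : H B (x *: B') = (cj x) * H B B'.
Proof.
rewrite !H_expand mulr_sumr; apply: eq_bigr => i _.
rewrite mulr_sumr; apply: eq_bigr => j _.
rewrite mulr_sumr; apply: eq_bigr => k _.
rewrite mulr_sumr; apply: eq_bigr => l _.
by rewrite mxE conjM; ring.
Qed.

Lemma sum_pick (F : 'I_d -> C) i :
  \sum_z (if z == i then F z else 0) = F i.
Proof. by rewrite -big_mkcond big_pred1_eq. Qed.

Lemma H_delta i j k l : H (delta_mx i j) (delta_mx k l) = h i j k l.
Proof.
rewrite H_expand.
rewrite (eq_bigr (fun i' => if i' == i then \sum_j' \sum_k' \sum_l'
   (delta_mx i j i' j' * (cj (delta_mx k l k' l'))) * h i' j' k' l' else 0)).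
  rewrite sum_pick.
  rewrite (eq_bigr (fun j' => if j' == j then \sum_k' \sum_l'
     (delta_mx i j i j' * (cj (delta_mx k l k' l'))) * h i j' k' l' else 0)).
    rewrite sum_pick.
    rewrite (eq_bigr (fun k' => if k' == k then \sum_l'
       (delta_mx i j i j * (cj (delta_mx k l k' l'))) * h i j k' l' else 0)).
      rewrite sum_pick.
      rewrite (eq_bigr (fun l' => if l' == l then
        (delta_mx i j i j * (cj (delta_mx k l k l'))) * h i j k l' else 0)).
        by rewrite sum_pick !mxE !eqxx /= conj1 !mul1r.
      move=> l' _; case: eqP => [->//|/eqP hl]; rewrite !mxE (negbTE hl) andbF.
      by rewrite conj0 !mulr0 mul0r.
    move=> k' _; case: eqP => [->//|/eqP hk]; rewrite big1 // => l' _.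
    by rewrite !mxE (negbTE hk) conj0 !mulr0 mul0r.
  move=> j' _; case: eqP => [->//|/eqP hj]; rewrite big1 // => k' _.
  by rewrite big1 // => l' _; rewrite !mxE (negbTE hj) andbF !mul0r.
move=> i' _; case: eqP => [->//|/eqP hi]; rewrite big1 // => j' _.
by rewrite big1 // => k' _; rewrite big1 // => l' _; rewrite !mxE (negbTE hi) !mul0r.
Qed.

Lemma H_inv (W : M) B B' : unitary W ->
  H (adj W *m B *m W) (adj W *m B' *m W) = H B B'.
Proof.
move=> hW; rewrite /H -(Ic_inv hI hW (contc_Hf B B')); congr Ic.
apply: functional_extensionality => U.
by rewrite /Hf !adjM !mulmxA.
Qed.

Lemma adj_delta (W : M) i j :
  adj W *m delta_mx i j *m W = \matrix_(x, y) ((cj (W i x)) * W j y).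
Proof.
apply/matrixP => x y; rewrite entry_formula mxE.
rewrite (eq_bigr (fun i' => if i' == i then \sum_j' (cj (W i' x)) * delta_mx i j i' j' * W j' y else 0)).
  rewrite sum_pick.
  rewrite (eq_bigr (fun j' => if j' == j then (cj (W i x)) * delta_mx i j i j' * W j' y else 0)).
    by rewrite sum_pick mxE !eqxx mulr1.
  by move=> j' _; case: eqP => [->//|/eqP hj]; rewrite !mxE (negbTE hj) andbF mulr0 mul0r.
move=> i' _; case: eqP => [->//|/eqP hi]; rewrite big1 // => j' _.
by rewrite !mxE (negbTE hi) mulr0 mul0r.
Qed.



Lemma ii : 'i * cj 'i = 1 :> C.
Proof. by rewrite /cj /=; simpc. Qed.
Lemma cji : cj 'i = - 'i :> C.
Proof. by rewrite /cj /=; simpc. Qed.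
Lemma i_neq1 : 'i != 1 :> C.
Proof. by apply/eqP => -[] /eqP; rewrite eq_sym oner_eq0. Qed.
Lemma cji_neq1 : cj 'i != 1 :> C.
Proof. by apply/eqP; rewrite /cj /= => -[] /eqP; rewrite eq_sym oner_eq0. Qed.
Lemma cji2_neq1 : cj 'i * cj 'i != 1 :> C.
Proof.
rewrite /cj /=; simpc. apply/eqP => -[] /eqP.
by rewrite -subr_eq0 -opprD oppr_eq0 paddr_eq0 ?ler01 // oner_eq0.
Qed.
Lemma cj_real (x : R) : cj (x%:C) = x%:C.
Proof. exact: conjc_real. Qed.
Lemma conjN (x : C) : cj (- x) = - cj x.
Proof. exact: rmorphN. Qed.
Lemma conj_nat n : cj (n%:R : C) = n%:R.
Proof. exact: rmorph_nat. Qed.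

Lemma eq_sym_ne (x y : 'I_d) : x != y -> y != x.
Proof. by rewrite eq_sym. Qed.

Lemma ne_sym (x y : 'I_d) : x != y -> (y == x) = false.
Proof. by rewrite eq_sym => /negbTE. Qed.

Lemma sum_pick' (F : 'I_d -> C) i : (forall z, z != i -> F z = 0) -> \sum_z F z = F i.
Proof. by move=> HF; rewrite (bigD1 i) //= big1 ?addr0 // => z /HF. Qed.

Lemma sum_two (i0 i1 : 'I_d) (F : 'I_d -> C) : i0 != i1 ->
  (forall z, z != i0 -> z != i1 -> F z = 0) -> \sum_z F z = F i0 + F i1.
Proof.
move=> n01 HF; rewrite (bigD1 i0) //= (bigD1 i1) /=; last by rewrite eq_sym.
by rewrite big1 ?addr0 // => z /andP [z0 z1]; exact: HF.
Qed.

Lemma fixzero (f x : C) : f != 1 -> x = f * x -> x = 0.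
Proof.
move=> f1 E; apply/eqP.
have : (1 - f) * x == 0 by rewrite mulrBl mul1r -E subrr.
by rewrite mulf_eq0 subr_eq0 eq_sym (negbTE f1).
Qed.

(* invariance under a unitary W sending each delta_mx to a scaled delta_mx *)
Lemma H_phase (W : M) (s : 'I_d -> C) : unitary W ->
  (forall x y, W x y = if x == y then s x else 0) ->
  forall i j k l, h i j k l = cj (s i) * s j * cj (cj (s k) * s l) * h i j k l.
Proof.
move=> hW HW.
have E : forall i j, adj W *m delta_mx i j *m W = (cj (s i) * s j) *: delta_mx i j.
  move=> i j; rewrite adj_delta; apply/matrixP => x y; rewrite !mxE !HW.
  case: (eqVneq x i) => [Ex|xi]; case: (eqVneq y j) => [Ey|yj]; try subst x; try subst y;
    rewrite ?eqxx ?(ne_sym xi) ?(ne_sym yj) /= ?conj0 ?mulr0 ?mul0r ?mulr1 //.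
move=> i j k l.
transitivity (H (delta_mx i j) (delta_mx k l)); first by rewrite H_delta.
by rewrite -(H_inv _ _ hW) !E H_scalel H_scaler H_delta mulrA.
Qed.

Definition sph (m t : 'I_d) : C := if t == m then 'i else 1.

Lemma sph_norm m t : cj (sph m t) * sph m t = 1.
Proof. by rewrite /sph; case: (t == m); rewrite ?conj1 ?mulr1 // mulrC ii. Qed.

Definition dg (m : 'I_d) : M := \matrix_(x, y) (if x == y then sph m x else 0).

Lemma dg_unitary m : unitary (dg m).
Proof.
rewrite /unitary; apply/matrixP => x y; rewrite mxE.
rewrite (sum_pick' (i := x)); last first.
  by move=> z zx; rewrite adjE !mxE (ne_sym zx) mul0r.
rewrite adjE !mxE eqxx; case: (boolP (y == x)) => [/eqP Ey|yx].
  by rewrite Ey eqxx mulrC sph_norm.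
by rewrite /= (ne_sym yx) conj0 mulr0.
Qed.

Lemma h_phase m i j k l :
  h i j k l = cj (sph m i) * sph m j * cj (cj (sph m k) * sph m l) * h i j k l.
Proof. by apply: (H_phase (dg_unitary m)) => x y; rewrite mxE. Qed.

Lemma sph_eq m : sph m m = 'i. Proof. by rewrite /sph eqxx. Qed.
Lemma sph_ne m t : t != m -> sph m t = 1. Proof. by rewrite /sph => /negbTE ->. Qed.

Lemma h_zero i j k l : ~~ ((i == j) && (k == l)) -> ~~ ((i == k) && (j == l)) ->
  h i j k l = 0.
Proof.
move=> n1 n2.
have [ij|nij] := eqVneq i j.
  subst j; rewrite eqxx /= in n1.
  apply: (@fixzero ('i)); first exact: i_neq1.
  rewrite {1}(h_phase k i i k l) sph_eq (sph_ne (eq_sym_ne n1)) sph_norm.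
  by rewrite mul1r mulr1 conjK.
have [ik|nik] := eqVneq i k.
  subst k; rewrite eqxx /= in n2.
  apply: (@fixzero ('i)); first exact: i_neq1.
  rewrite {1}(h_phase j i j i l) sph_eq (sph_ne nij) (sph_ne (eq_sym_ne n2)).
  by rewrite !conj1 !mul1r conj1 mulr1.
apply: (@fixzero (if l == i then cj 'i * cj 'i else cj 'i)).
  by case: (l == i); [exact: cji2_neq1|exact: cji_neq1].
rewrite {1}(h_phase i i j k l) sph_eq (sph_ne (eq_sym_ne nij)) (sph_ne (eq_sym_ne nik)).
rewrite !conj1 !mul1r mulr1.
case: (boolP (l == i)) => [/eqP El|li].
  by rewrite El sph_eq.
by rewrite (sph_ne li) conj1 mulr1.
Qed.



Definition pm (s : 'S_d) : M := \matrix_(x, y) ((s x == y)%:R).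

Lemma pm_unitary s : unitary (pm s).
Proof.
rewrite /unitary; apply/matrixP => x y; rewrite mxE.
rewrite (sum_pick' (i := s x)); last first.
  by move=> z zx; rewrite adjE !mxE (ne_sym zx) mul0r.
rewrite adjE !mxE eqxx conj_nat mul1r (inj_eq (@perm_inj _ s)).
by rewrite eq_sym.
Qed.

Lemma h_perm (s : 'S_d) i j k l : h i j k l = h (s i) (s j) (s k) (s l).
Proof.
have E : forall i j, adj (pm s) *m delta_mx i j *m pm s = delta_mx (s i) (s j).
  move=> i' j'; rewrite adj_delta; apply/matrixP => x y; rewrite !mxE conj_nat.
  rewrite [x == _]eq_sym [y == _]eq_sym.
  by case: (s i' == x); case: (s j' == y); rewrite /= ?mul0r ?mulr0 ?mul1r.
transitivity (H (delta_mx i j) (delta_mx k l)); first by rewrite H_delta.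
by rewrite -(H_inv _ _ (pm_unitary s)) !E H_delta.
Qed.

Variables i0 i1 : 'I_d.
Hypothesis n01 : i0 != i1.

Lemma perm2 (i k : 'I_d) : i != k -> exists s : 'S_d, s i0 = i /\ s i1 = k.
Proof.
move=> ik.
pose t1 := tperm i0 i; pose k' := t1 k; pose t2 := tperm i1 k'.
have k'0 : k' != i0.
  apply/negP => /eqP E.
  have : t1 k = t1 i by rewrite /t1 tpermR; exact: E.
  by move/perm_inj => Eki; rewrite Eki eqxx in ik.
have t2i0 : t2 i0 = i0 by rewrite /t2 tpermD // eq_sym.
exists (t2 * t1)%g; rewrite !permM; split.
  by rewrite t2i0 /t1 tpermL.
by rewrite /t2 tpermL /k' tpermK.
Qed.

Definition al := h i0 i0 i1 i1.
Definition be := h i0 i1 i0 i1.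
Definition ga := h i0 i0 i0 i0.

Lemma h_al i k : i != k -> h i i k k = al.
Proof. move=> ik; have [s [<- <-]] := perm2 ik; by rewrite /al (h_perm s i0 i0 i1 i1). Qed.

Lemma h_be i j : i != j -> h i j i j = be.
Proof. move=> ij; have [s [<- <-]] := perm2 ij; by rewrite /be (h_perm s i0 i1 i0 i1). Qed.

Lemma h_ga i : h i i i i = ga.
Proof. by rewrite /ga (h_perm (tperm i0 i) i0 i0 i0 i0) tpermL. Qed.



Definition ra : C := (3 / 5 : R)%:C.
Definition rb : C := (4 / 5 : R)%:C.

Lemma cja : cj ra = ra. Proof. exact: cj_real. Qed.
Lemma cjb : cj rb = rb. Proof. exact: cj_real. Qed.

Lemma rab : ra * ra + rb * rb = 1.
Proof.
rewrite /ra /rb -!rmorphM -rmorphD.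
have -> : (3 / 5 * (3 / 5) + 4 / 5 * (4 / 5) : R) = 1.
  have h5 : (5 : R) != 0 by rewrite pnatr_eq0.
  by field.
exact: rmorph1.
Qed.

Lemma rab0 : ra * rb != 0.
Proof.
rewrite /ra /rb -rmorphM; apply/eqP => -[] /eqP.
rewrite mulf_eq0 !mulf_eq0 !invr_eq0 !pnatr_eq0 //.
Qed.

Definition r0 (y : 'I_d) : C := if y == i0 then ra else if y == i1 then rb else 0.
Definition r1 (y : 'I_d) : C := if y == i0 then - rb else if y == i1 then ra else 0.

Definition rot : M := \matrix_(x, y)
  (if x == i0 then r0 y else if x == i1 then r1 y else (x == y)%:R).

Lemma n10 : i1 != i0. Proof. by rewrite eq_sym. Qed.

Lemma r0_i0 : r0 i0 = ra. Proof. by rewrite /r0 eqxx. Qed.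
Lemma r0_i1 : r0 i1 = rb. Proof. by rewrite /r0 (negbTE n10) eqxx. Qed.
Lemma r0_o z : z != i0 -> z != i1 -> r0 z = 0.
Proof. by rewrite /r0 => /negbTE -> /negbTE ->. Qed.
Lemma r1_i0 : r1 i0 = - rb. Proof. by rewrite /r1 eqxx. Qed.
Lemma r1_i1 : r1 i1 = ra. Proof. by rewrite /r1 (negbTE n10) eqxx. Qed.
Lemma r1_o z : z != i0 -> z != i1 -> r1 z = 0.
Proof. by rewrite /r1 => /negbTE -> /negbTE ->. Qed.

Lemma rot_i0 y : rot i0 y = r0 y. Proof. by rewrite mxE eqxx. Qed.
Lemma rot_i1 y : rot i1 y = r1 y. Proof. by rewrite mxE (negbTE n10) eqxx. Qed.
Lemma rot_o x y : x != i0 -> x != i1 -> rot x y = (x == y)%:R.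
Proof. by rewrite mxE => /negbTE -> /negbTE ->. Qed.

Lemma id_entry (x y : 'I_d) : (1%:M : M) x y = (x == y)%:R.
Proof. by rewrite mxE. Qed.

Lemma rot_unitary : unitary rot.
Proof.
rewrite /unitary; apply/matrixP => x y; rewrite mxE.
under eq_bigr => z _ do rewrite adjE.
have kind : forall w : 'I_d, [\/ w = i0, w = i1 | w != i0 /\ w != i1].
  move=> w; case: (boolP (w == i0)) => [/eqP->|w0]; first by constructor 1.
  case: (boolP (w == i1)) => [/eqP->|w1]; first by constructor 2.
  by constructor 3.
have rowv : forall w, (w = i0 \/ w = i1) -> forall z, z != i0 -> z != i1 -> rot w z = 0.
  by move=> w [->|->] z z0 z1; rewrite ?rot_i0 ?rot_i1 ?r0_o ?r1_o.
have colv : forall w, w != i0 -> w != i1 -> rot i0 w = 0 /\ rot i1 w = 0.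
  by move=> w w0 w1; rewrite rot_i0 rot_i1 r0_o ?r1_o.
have [->|->|[x0 x1]] := kind x.
- rewrite (sum_two n01); last first.
    by move=> z z0 z1; rewrite (rowv i0 (or_introl erefl)) // mul0r.
  rewrite !rot_i0 r0_i0 r0_i1 id_entry.
  have [->|->|[y0 y1]] := kind y.
  + by rewrite !rot_i0 r0_i0 r0_i1 cja cjb rab eqxx.
  + rewrite !rot_i1 r1_i0 r1_i1 cja conjN cjb (negbTE n01).
    by rewrite mulrN mulrC addNr.
  + by rewrite !rot_o // (negbTE y0) (negbTE y1) conj0 !mulr0 addr0 (ne_sym y0).
- rewrite (sum_two n01); last first.
    by move=> z z0 z1; rewrite (rowv i1 (or_intror erefl)) // mul0r.
  rewrite !rot_i1 r1_i0 r1_i1 id_entry.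
  have [->|->|[y0 y1]] := kind y.
  + rewrite !rot_i0 r0_i0 r0_i1 cja cjb (negbTE n10).
    by rewrite mulNr mulrC addNr.
  + by rewrite !rot_i1 r1_i0 r1_i1 cja conjN cjb mulrNN addrC rab eqxx.
  + by rewrite !rot_o // (negbTE y0) (negbTE y1) conj0 !mulr0 addr0 (ne_sym y1).
- rewrite (sum_pick' (i := x)); last first.
    by move=> z zx; rewrite (@rot_o x z) // (ne_sym zx) mul0r.
  rewrite (@rot_o x x) // eqxx mul1r id_entry.
  have [->|->|[y0 y1]] := kind y.
  + by have [c0 _] := colv x x0 x1; rewrite c0 conj0 (negbTE x0).
  + by have [_ c1] := colv x x0 x1; rewrite c1 conj0 (negbTE x1).
  + by rewrite rot_o // conj_nat eq_sym.
Qed.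



Lemma rot_delta : adj rot *m delta_mx i0 i0 *m rot =
  (ra * ra) *: delta_mx i0 i0 + (ra * rb) *: delta_mx i0 i1 +
  (rb * ra) *: delta_mx i1 i0 + (rb * rb) *: delta_mx i1 i1.
Proof.
rewrite adj_delta; apply/matrixP => x y; rewrite mxE !rot_i0 !mxE.
have kind : forall w : 'I_d, [\/ w = i0, w = i1 | w != i0 /\ w != i1].
  move=> w; case: (boolP (w == i0)) => [/eqP->|w0]; first by constructor 1.
  case: (boolP (w == i1)) => [/eqP->|w1]; first by constructor 2.
  by constructor 3.
have [->|->|[x0 x1]] := kind x; have [->|->|[y0 y1]] := kind y;
  rewrite ?r0_i0 ?r0_i1 ?r0_o // ?cja ?cjb ?conj0 ?eqxx ?(negbTE n01) ?(negbTE n10)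
    ?(negbTE x0) ?(negbTE x1) ?(negbTE y0) ?(negbTE y1) /=
    ?mulr1 ?mulr0 ?mul0r ?addr0 ?add0r //.
Qed.

Lemma ga_albe : ga = al + be.
Proof.
have Eq : ga = H (adj rot *m delta_mx i0 i0 *m rot) (adj rot *m delta_mx i0 i0 *m rot).
  by rewrite (H_inv _ _ rot_unitary) H_delta.
rewrite rot_delta !H_addl !H_addr !H_scalel !H_scaler !H_delta in Eq.
rewrite (h_ga i1) (h_al n10) (h_be n10) -/ga -/al -/be in Eq.
rewrite !h_zero in Eq; try by rewrite ?eqxx ?(negbTE n01) ?(negbTE n10).
rewrite !conjM cja cjb !mulr0 !addr0 !add0r in Eq.
have Eq' : ga = (ra * ra) * (ra * ra) * ga + (rb * rb) * (rb * rb) * ga +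
   2 * (ra * rb) * (ra * rb) * (al + be).
  by rewrite {1}Eq; ring.
have E2 : 2 * (ra * rb) ^+ 2 * (ga - (al + be)) = 0.
  transitivity (ga * (ra * ra + rb * rb) ^+ 2 - ((ra * ra) * (ra * ra) * ga +
     (rb * rb) * (rb * rb) * ga + 2 * (ra * rb) * (ra * rb) * (al + be))).
    by ring.
  by rewrite rab expr1n mulr1 -Eq' subrr.
have := rab0; rewrite mulf_eq0 negb_or => /andP [/negbTE ha /negbTE hb].
move/eqP: E2; rewrite !mulf_eq0 pnatr_eq0 ha hb /=.
by rewrite subr_eq0 => /eqP.
Qed.



Lemma h_all i j k l :
  h i j k l = al * ((i == j) && (k == l))%:R + be * ((i == k) && (j == l))%:R.
Proof.
case: (boolP ((i == j) && (k == l))) => [/andP [/eqP Eij /eqP Ekl]|n1].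
  rewrite -Eij -Ekl; case: (boolP (i == k)) => [/eqP Eik|nik].
    by rewrite -Eik h_ga ga_albe /= !mulr1.
  by rewrite (h_al nik) /= mulr1 mulr0 addr0.
case: (boolP ((i == k) && (j == l))) => [/andP [/eqP Eik /eqP Ejl]|n2].
  rewrite -Eik -Ejl (h_be (j := j)) /= ?mulr1n ?mulr0n ?mulr0 ?mulr1 ?add0r //.
  by apply/negP => /eqP E; move: n1; rewrite -Eik -Ejl E !eqxx.
by rewrite h_zero //= ?mulr0n !mulr0 addr0.
Qed.

Lemma P1 (x : 'I_d -> 'I_d -> 'I_d -> 'I_d -> C) :
  \sum_i \sum_j \sum_k \sum_l (x i j k l * ((i == j) && (k == l))%:R) =
  \sum_i \sum_k x i i k k.
Proof.
apply: eq_bigr => i _; rewrite [LHS](sum_pick' (i := i)); last first.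
  move=> j ji; apply: big1 => k _; apply: big1 => l _.
  by rewrite (ne_sym ji) /= mulr0.
apply: eq_bigr => k _; rewrite [LHS](sum_pick' (i := k)); last first.
  by move=> l lk; rewrite (ne_sym lk) andbF mulr0.
by rewrite !eqxx mulr1.
Qed.

Lemma P2 (x : 'I_d -> 'I_d -> 'I_d -> 'I_d -> C) :
  \sum_i \sum_j \sum_k \sum_l (x i j k l * ((i == k) && (j == l))%:R) =
  \sum_i \sum_j x i j i j.
Proof.
apply: eq_bigr => i _; apply: eq_bigr => j _.
rewrite [LHS](sum_pick' (i := i)); last first.
  by move=> k ki; apply: big1 => l _; rewrite (ne_sym ki) /= mulr0.
rewrite [LHS](sum_pick' (i := j)); last first.
  by move=> l lj; rewrite (ne_sym lj) andbF mulr0.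
by rewrite !eqxx mulr1.
Qed.

Lemma H_BB (B : M) : H B B =
  \sum_i \sum_k (B i i * cj (B k k) * al) + \sum_i \sum_j (B i j * cj (B i j) * be).
Proof.
have E1 := P1 (fun i j k l => B i j * cj (B k l) * al).
have E2 := P2 (fun i j k l => B i j * cj (B k l) * be).
simpl in E1, E2.
rewrite H_expand -E1 -E2 -big_split; apply: eq_bigr => i _.
rewrite -big_split; apply: eq_bigr => j _.
rewrite -big_split; apply: eq_bigr => k _.
rewrite -big_split; apply: eq_bigr => l _.
by rewrite h_all /= mulrDr !mulrA.
Qed.

Lemma sum_mul0 (F : 'I_d -> C) (K : C) : \sum_i F i = 0 -> \sum_i F i * K = 0.
Proof. by move=> H0; rewrite -mulr_suml H0 mul0r. Qed.

Lemma H_final (L : M) : \tr L = 0 -> \tr (L *m adj L) = d%:R ->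
  H (adj L) (adj L) = be * d%:R.
Proof.
move=> h0 hn; rewrite H_BB.
have t0 : \sum_i adj L i i = 0.
  under eq_bigr => i _ do rewrite adjE.
  apply: etrans (esym (conj_sumf _)) _.
  by rewrite -/(mxtrace L) h0 conj0.
have -> : \sum_i \sum_k (adj L i i * cj (adj L k k) * al) = 0.
  rewrite (eq_bigr (fun i => adj L i i * \sum_k (cj (adj L k k) * al))).
    by apply: sum_mul0; exact: t0.
  by move=> i _; rewrite mulr_sumr; apply: eq_bigr => k _; rewrite mulrA.
rewrite add0r.
transitivity ((\sum_j \sum_i L j i * cj (L j i)) * be).
  rewrite exchange_big mulr_suml; apply: eq_bigr => i _.
  rewrite mulr_suml; apply: eq_bigr => j _.
  by rewrite !adjE conjK [cj _ * _]mulrC.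
have -> : \sum_j \sum_i L j i * cj (L j i) = \tr (L *m adj L).
  rewrite /mxtrace; apply: eq_bigr => j _; rewrite mxE; apply: eq_bigr => i _.
  by rewrite adjE.
by rewrite hn mulrC.
Qed.

End Key.

Section Final.
Variable R : realType.
Local Notation C := R[i].

Lemma abs2E (z : C) : abs2 z = complex.Re (z * cj z).
Proof. by case: z => x y; rewrite /abs2 /cj /= !expr2 mulrN opprK. Qed.

Lemma sumN_cj (T : finType) n (F : seq T -> C) :
  cj (sumN n F) = sumN n (fun s => cj (F s)).
Proof. exact: sumN_conj. Qed.

Lemma pr_cj (T : Type) (s : seq T) (G : nat -> T -> C) :
  cj (pr s G) = pr s (fun m q => cj (G m q)).
Proof. exact: pr_conj. Qed.

Lemma cjM (x y : C) : cj (x * y) = cj x * cj y. Proof. exact: rmorphM. Qed.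

End Final.

Lemma RfunE (R : realType) (d N : nat) (rho : 'M[R[i]]_(d ^ N))
  (I : ('M[R[i]]_d -> R) -> R) (hI : haar_integral I)
  (kap : seq ('I_d * 'I_d) -> R[i])
  (Hk : forall Y : nat -> 'M[R[i]]_d,
    \tr (rho *m tensN N Y) = sumN N (fun s => kap s * pr s (fun m p => Y m p.1 p.2)))
  (L : nat -> 'M[R[i]]_d) :
  Rfun I rho L = complex.Re (sumN N (fun qs : seq (('I_d * 'I_d) * ('I_d * 'I_d)) =>
     (kap (unzip1 qs) * cj (kap (unzip2 qs))) *
     pr qs (fun m q => Ic I (Hf q.1.1 q.1.2 q.2.1 q.2.2 (adj (L m)) (adj (L m)))))).
Proof.
rewrite /Rfun.
have -> : (fun Us => abs2 (\tr (rho *m tensN N (fun n => adj (Us n) *m adj (L n) *m Us n)))) =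
  (fun Us => complex.Re (sumN N (fun qs : seq (('I_d * 'I_d) * ('I_d * 'I_d)) =>
     (kap (unzip1 qs) * cj (kap (unzip2 qs))) *
     pr qs (fun m q => Hf q.1.1 q.1.2 q.2.1 q.2.2 (adj (L m)) (adj (L m)) (Us m))))).
  apply: functional_extensionality => Us.
  rewrite abs2E Hk; congr complex.Re.
  rewrite sumN_cj sumN_mul; apply: sumN_ext => qs _.
  rewrite cjM pr_cj.
  transitivity (kap (unzip1 qs) * cj (kap (unzip2 qs)) *
    (pr (unzip1 qs) (fun m p => (adj (Us m) *m adj (L m) *m Us m) p.1 p.2) *
     pr (unzip2 qs) (fun m p => cj ((adj (Us m) *m adj (L m) *m Us m) p.1 p.2)))).
    by rewrite mulrACA.
  by rewrite pr_mul.
apply: iter_int_pf => // m q; exact: contc_Hf.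
Qed.

Theorem theorem9 (R : realType) (d N : nat) (hd : (2 <= d)%N) (hN : (1 <= N)%N)
  (rho : 'M[R[i]]_(d ^ N)) (hrho : is_state rho)
  (I : ('M[R[i]]_d -> R) -> R) (hI : haar_integral I)
  (lam mu : nat -> 'M[R[i]]_d)
  (hlam : forall n, (n < N)%N ->
     \tr (lam n) = 0 /\ \tr (lam n *m adj (lam n)) = d%:R)
  (hmu : forall n, (n < N)%N ->
     \tr (mu n) = 0 /\ \tr (mu n *m adj (mu n)) = d%:R) :
  Rfun I rho lam = Rfun I rho mu.
Proof.
have h0 : (0 < d)%N by apply: leq_trans hd.
pose i0 := Ordinal h0; pose i1 := Ordinal hd.
have n01 : i0 != i1 by [].
have [kap Hk] := tr_tens rho.
rewrite (RfunE hI Hk) (RfunE hI Hk); congr complex.Re.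
apply: sumN_ext => qs hs; congr (_ * _); apply: pr_ext => m q hm.
rewrite hs in hm.
have [l0 l1] := hlam m hm; have [m0 m1] := hmu m hm.
transitivity (be I q.1.1 q.1.2 q.2.1 q.2.2 i0 i1 * d%:R).
  exact: (H_final hI _ _ _ _ n01 l0 l1).
symmetry; exact: (H_final hI _ _ _ _ n01 m0 m1).
Qed.
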